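(* Let $P$ be a CSP instance. The procedure EnumSolutions, applied to $P$, returns exactly $\mathsf{sol}(P)$.
   Context: Each variable $v$ has a domain $D(v)$; an assignment of a set of variables $W$ is a map $\theta$ with $\theta(v)\in D(v)$ for $v\in W$; $\theta|_X$ denotes restriction, and the assignment of the empty set of variables is $\bot$. A global constraint $e[\delta]$ consists of a polynomial-time algorithm $e$ together with a description $\delta$ specifying a scope $\mathcal V(\delta)$; it maps assignments of $\mathcal V(\delta)$ to $\{0,1\}$, and $\theta\in e[\delta]$ means $e[\delta](\theta)=1$. A CSP instance is $\langle V,C\rangle$ with $V$ a finite set of variables and $C$ a set of global constraints with scopes contained in $V$; a solution is an assignment $\theta$ of $V$ with $\theta|_{\mathcal V(\delta)}\in e[\delta]$ for all $e[\delta]\in C$, and $\mathsf{sol}(P)$ is the set of solutions. For $X\subseteq\mathcal V(\delta)$, $\mathsf{pj}_X(e[\delta])$ is the constraint on $X$ satisfied by $\mu$ iff some $\theta\in e[\delta]$ has $\theta|_X=\mu$; for $X\subseteq V$, $\mathsf{pj}_X(P)=\langle X,C'\rangle$ where $C'$ is the least set containing $\mathsf{pj}_{X\cap\mathcal V(\delta)}(e[\delta])$ for every $e[\delta]\in C$ with $X\cap\mathcal V(\delta)\ne\emptyset$. The procedure EnumSolutions$(P)$ for $P=\langle V,C\rangle$: if $V=\emptyset$, return $\{\bot\}$; otherwise pick some variable $w\in V$, recursively compute $\Theta=$ EnumSolutions$(\mathsf{pj}_{V\setminus\{w\}}(P))$, and return the set of all assignments $\theta\cup\{w\mapsto a\}$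 with $\theta\in\Theta$ and $a\in D(w)$ that are solutions of $P$. *)

(* Defs.v *)
From HB Require Import structures.
From mathcomp Require Import all_boot.
From mathcomp Require Import finmap.

Set Implicit Arguments.
Unset Strict Implicit.
Unset Printing Implicit Defensive.

Local Open Scope fset_scope.

(* CSP instances with global constraints, projections, and the procedure
   EnumSolutions (as a relation: any choice of the variable w is allowed
   at every recursive call). *)

Section CSP.

Variable var : choiceType.
Variable D : var -> Type.

Definition assignment := forall v : var, option (D v).

Definition is_assign (W : {fset var}) (theta : assignment) : Prop :=
  forall v, isSome (theta v) = (v \in W).

Definition bot : assignment := fun _ => None.

Definition restr (X : {fset var}) (theta : assignment) : assignment :=
  fun v => if v \in X then theta v else None.

(* theta \cup {w |-> a} *)
Definition ext (theta : assignment) (w : var) (a : D w) : assignment :=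
  fun v => if @eqP var w v is ReflectT e then Some (eq_rect w D a v e)
           else theta v.

(* A global constraint e[delta]: its scope V(delta) and its acceptance
   predicate (meaningful on assignments of the scope). *)
Record gconstr := GConstr {
  scope : {fset var};
  accepts : assignment -> Prop
}.

Definition pj_constr (X : {fset var}) (c : gconstr) : gconstr :=
  GConstr X (fun mu => exists theta, is_assign (scope c) theta /\
                                     accepts c theta /\ restr X theta = mu).

Record csp := CSP {
  csp_vars : {fset var};
  csp_cons : gconstr -> Prop
}.

Definition well_formed (P : csp) : Prop :=
  forall c, csp_cons P c -> scope c `<=` csp_vars P.

Definition is_solution (P : csp) (theta : assignment) : Prop :=
  is_assign (csp_vars P) theta /\
  forall c, csp_cons P c -> accepts c (restr (scope c) theta).

Definition pj_csp (X : {fset var}) (P : csp) : csp :=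
  CSP X (fun c' => exists2 c, csp_cons P c &
                   X `&` scope c != fset0 /\ c' = pj_constr (X `&` scope c) c).

Inductive enum_solutions : csp -> (assignment -> Prop) -> Prop :=
| enum_empty P :
    csp_vars P = fset0 -> enum_solutions P (fun theta => theta = bot)
| enum_step P w Theta :
    w \in csp_vars P ->
    enum_solutions (pj_csp (csp_vars P `\ w) P) Theta ->
    enum_solutions P (fun theta' => exists theta (a : D w),
        Theta theta /\ theta' = ext theta a /\ is_solution P theta').

End CSP.

(* Main.v *)
Require Import Defs.
From mathcomp Require Import all_boot.
From mathcomp Require Import finmap.
From Stdlib Require Import FunctionalExtensionality.

Local Open Scope fset_scope.

Theorem theorem4 (var : choiceType) (D : var -> Type) (P : csp D) :
  well_formed P ->
  (forall c, csp_cons P c -> scope c != fset0) ->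
  forall Theta, enum_solutions P Theta ->
  forall theta, Theta theta <-> is_solution P theta.
Proof.
move=> HW HN Theta HE; elim: HE HW HN => {P Theta}.
- move=> P HV HW HN theta; split.
  + move=> ->; split.
    * by move=> v; rewrite HV inE.
    * move=> c Hc; exfalso; have := HW c Hc; rewrite HV fsubset0 => /eqP E.
      by have := HN c Hc; rewrite E eqxx.
  + move=> [HA _]; apply: functional_extensionality_dep => v.
    have := HA v; rewrite HV inE /bot; by case: (theta v).
- move=> P w Theta Hw HE IH HW HN theta'; split.
  + by move=> [theta [a [_ [_ H]]]].
  + move=> Hs.
    have IH' : forall t, Theta t <-> is_solution (pj_csp (csp_vars P `\ w) P) t.
      apply: IH.
      * move=> c' [c _ [_ ->]] /=; exact: fsubsetIl.
      * by move=> c' [c _ [H ->]].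
    case: (Hs) => HA HC.
    have := HA w; rewrite Hw; case Ew: (theta' w) => [a|] // _.
    exists (restr (csp_vars P `\ w) theta'), a; split; last split => //.
    * apply/IH'; split.
      - move=> v /=; rewrite /restr; case: ifP => H //.
        by have := HA v; move: H; rewrite !inE => /andP [_ ->].
      - move=> c' [c Hc [_ ->]] /=.
        exists (restr (scope c) theta'); split; last split.
        + move=> v; rewrite /restr; case: ifP => H //; rewrite HA.
          by apply: (fsubsetP (HW c Hc)).
        + exact: HC.
        + apply: functional_extensionality_dep => v; rewrite /restr.
          by case: ifP => //; rewrite inE => /andP [-> ->].

    * apply: functional_extensionality_dep => v; rewrite /ext /restr.
      case: eqP => [e|ne]; first by case: v / e; rewrite Ew.
      rewrite !inE; case: ifP => //.
      move/negbT; rewrite negb_and /= => /orP [/negPn/eqP e|H]; first by case: ne.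
      by have := HA v; rewrite (negbTE H); case: (theta' v).
Qed.
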